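(* In any two-player perfect-information game, with exact EPFs $U_s$ and bounds $\underline V,\overline V$ as in the context, for every state $s\in\mathcal S$ we have $\{\mu\in\mathbb R: U_s(\mu)>-\infty\}=[\underline V(s),\overline V(s)]$.
   Context: A two-player perfect-information game is a finite rooted tree with states $\mathcal S$. Its leaves $\mathcal L$ carry payoffs $r_1(\ell),r_2(\ell)$ for the leader $\mathsf P_1$ and the follower $\mathsf P_2$. Non-leaf states are partitioned into leader states $\mathcal S_1$ and follower states $\mathcal S_2$, and $\mathcal C(s)$ denotes the children of $s$. Bounds, defined by backward induction: - $\underline V(\ell)=\overline V(\ell)=r_2(\ell)$ for leaves; - $\underline V(s)=\min_{s'\in\mathcal C(s)}\underline V(s')$ for $s\in\mathcal S_1$; - $\underline V(s)=\max_{s'\in\mathcal C(s)}\underline V(s')$ for $s\in\mathcal S_2$; - $\overline V(s)=\max_{s'\in\mathcal C(s)}\overline V(s')$ for every non-leaf $s$. For $s\in\mathcal S_2$ and $s'\in\mathcal C(s)$, let $\tau(s')=\max_{s^!\in\mathcal C(s),s^!\ne s'}\underline V(s^!)$ (the maximum over the empty set is $-\infty$). Let $\beta(s')=\tau(s')$ if the parent of $s'$ is in $\mathcal S_2$, and $-\infty$ if it is in $\mathcal S_1$. Operators, for $g:\mathbb R\to\mathbb R\cup\{-\infty\}$: - $\bigwedge_i g_i$ is the pointwise infimum of all concave $h\ge\max_i g_i$; - $[g\triangleright t](\mu)=g(\mu)$ for $\mu\ge t$ and $-\infty$ otherwise. Exact Enforceable Payoff Frontiers: $U_\ell(\mu)=r_1(\ell)$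 if $\mu=r_2(\ell)$ and $-\infty$ otherwise; $U_s=\bigwedge_{s'\in\mathcal C(s)}(U_{s'}\triangleright\beta(s'))$ for non-leaf $s$. *)

(* Defs.v *)
From HB Require Import structures.
From mathcomp Require Import all_boot all_order all_algebra.
From mathcomp Require Import boolp classical_sets reals constructive_ereal ereal set_interval.

Set Implicit Arguments.
Unset Strict Implicit.
Unset Printing Implicit Defensive.
Import Order.TTheory GRing.Theory Num.Theory.
Local Open Scope ring_scope.
Local Open Scope classical_set_scope.

Inductive player := Leader | Follower.

(* A finite rooted game tree.  Leaf r1 r2 carries payoffs r1 (leader) and
   r2 (follower).  Node p c cs is a non-leaf state owned by p whose
   (nonempty) list of children is c :: cs. *)
Inductive gtree (R : Type) :=
| Leaf of R & R
| Node of player & gtree R & seq (gtree R).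

Arguments Leaf {R}.
Arguments Node {R}.

Section Game.
Variable R : realType.

Fixpoint Vlo (t : gtree R) : R :=
  match t with
  | Leaf _ r2 => r2
  | Node Leader c cs => foldr Num.min (Vlo c) (map Vlo cs)
  | Node Follower c cs => foldr Num.max (Vlo c) (map Vlo cs)
  end.

Fixpoint Vhi (t : gtree R) : R :=
  match t with
  | Leaf _ r2 => r2
  | Node _ c cs => foldr Num.max (Vhi c) (map Vhi cs)
  end.

Definition tau (vs : seq R) (i : nat) : \bar R :=
  \big[Order.max/-oo%E]_(j < size vs | (j : nat) != i) (nth 0 vs j)%:E.

Definition beta (p : player) (vs : seq R) (i : nat) : \bar R :=
  match p with
  | Follower => tau vs i
  | Leader => -oo%E
  end.

Definition betas (p : player) (vs : seq R) : seq (\bar R) :=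
  [seq beta p vs i | i <- iota 0 (size vs)].

Definition concave_ext (h : R -> \bar R) : Prop :=
  forall (x y t : R), (0 < t < 1)%R ->
    (t%:E * h x + (1 - t)%R%:E * h y <= h (t * x + (1 - t) * y)%R)%E.

Definition no_pinfty (h : R -> \bar R) : Prop := forall x, (h x < +oo)%E.

Definition envelope (gs : seq (R -> \bar R)) : R -> \bar R :=
  fun mu => ereal_inf
    [set h mu | h in [set h | concave_ext h /\ no_pinfty h /\
        forall x, (\big[Order.max/-oo%E]_(g <- gs) g x <= h x)%E]].

Definition restr (g : R -> \bar R) (t : \bar R) : R -> \bar R :=
  fun mu => if (t <= mu%:E)%E then g mu else -oo%E.

Fixpoint U (t : gtree R) : R -> \bar R :=
  match t with
  | Leaf r1 r2 => fun mu => if mu == r2 then r1%:E else -oo%E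
  | Node p c cs =>
      envelope [seq restr f.1 f.2 |
                 f <- zip (U c :: map U cs) (betas p (Vlo c :: map Vlo cs))]
  end.

End Game.

(* Main.v *)
Require Import Defs.
From mathcomp Require Import all_boot all_order all_algebra.
From mathcomp Require Import boolp classical_sets reals constructive_ereal ereal set_interval.
From Stdlib Require List.
From mathcomp Require Import ring lra.
Import Order.TTheory GRing.Theory Num.Theory.
Local Open Scope ring_scope.
Local Open Scope classical_set_scope.

Section S.
Variable R : realType.

Lemma gtree_ind' (P : gtree R -> Prop) :
  (forall a b, P (Leaf a b)) ->
  (forall p c cs, P c -> List.Forall P cs -> P (Node p c cs)) ->
  forall t, P t.
Proof.
move=> HL HN; fix F 1 => -[a b|p c cs]; first exact: HL.
apply: HN; first exact: F.
elim: cs => [|x l IH]; first exact: List.Forall_nil.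
exact: List.Forall_cons (F x) IH.
Qed.

Lemma Forall_nth (P : gtree R -> Prop) l d k :
  List.Forall P l -> (k < size l)%N -> P (nth d l k).
Proof.
elim: l k => [|x l IH] [|k] //= H; inversion H; subst => //.
by move=> Hk; apply: IH.
Qed.

Lemma foldr_max_ge (x : R) xs y : y \in x :: xs -> y <= foldr Num.max x xs.
Proof.
elim: xs => [|z zs IH] /=; first by rewrite inE => /eqP ->.
move=> Hy; rewrite le_max; apply/orP.
have [->|yz] := eqVneq y z; first by left.
right; apply: IH; move: Hy; rewrite !inE (negbTE yz) /=; by [].
Qed.

Lemma foldr_max_mem (x : R) xs : foldr Num.max x xs \in x :: xs.
Proof.
elim: xs => [|z zs IH] /=; first by rewrite inE.
rewrite /Num.max; case: ifP => _; rewrite !inE ?eqxx ?orbT //.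
by move: IH; rewrite inE => /orP[->|->]; rewrite ?orbT.
Qed.

Lemma foldr_min_le (x : R) xs y : y \in x :: xs -> foldr Num.min x xs <= y.
Proof.
elim: xs => [|z zs IH] /=; first by rewrite inE => /eqP ->.
move=> Hy; rewrite ge_min; apply/orP.
have [->|yz] := eqVneq y z; first by left.
right; apply: IH; move: Hy; rewrite !inE (negbTE yz) /=; by [].
Qed.

Lemma foldr_min_mem (x : R) xs : foldr Num.min x xs \in x :: xs.
Proof.
elim: xs => [|z zs IH] /=; first by rewrite inE.
rewrite /Num.min; case: ifP => _; rewrite !inE ?eqxx ?orbT //.
by move: IH; rewrite inE => /orP[->|->]; rewrite ?orbT.
Qed.


Local Open Scope ereal_scope.

Lemma nth_le_bigmax (gs : seq (R -> \bar R)) d x k : (k < size gs)%N ->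
  nth d gs k x <= \big[Order.max/-oo]_(g <- gs) g x.
Proof.
elim: gs k => [|g gs IH] [|k] //= Hk; rewrite big_cons le_max.
  by rewrite lexx.
by rewrite IH ?orbT.
Qed.

Lemma bigmax_ub (gs : seq (R -> \bar R)) d x z :
  (forall k, (k < size gs)%N -> nth d gs k x <= z) ->
  \big[Order.max/-oo]_(g <- gs) g x <= z.
Proof.
elim: gs => [|g gs IH] H; first by rewrite big_nil leNye.
rewrite big_cons ge_max (H 0%N) //=; apply: IH => k Hk; exact: (H k.+1).
Qed.

Lemma env_dom (gs : seq (R -> \bar R)) (a b M : R) d :
  (a <= b)%R ->
  (forall k x, (k < size gs)%N -> nth d gs k x <= M%:E) ->
  (forall k x, (k < size gs)%N -> -oo < nth d gs k x -> (a <= x <= b)%R) ->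
  (exists2 k, (k < size gs)%N & -oo < nth d gs k a) ->
  (exists2 k, (k < size gs)%N & -oo < nth d gs k b) ->
  (forall mu, envelope gs mu <= M%:E) /\
  [set mu | -oo < envelope gs mu] = `[a, b]%classic.
Proof.
move=> ab HM Hdom [ka Hka Ha] [kb Hkb Hb].
pose h0 := fun x : R => if (a <= x <= b)%R then M%:E else -oo.
have h0adm : concave_ext h0 /\ no_pinfty h0 /\
   forall x, \big[Order.max/-oo]_(g <- gs) g x <= h0 x.
  split; [|split].
  - move=> x y t /andP[t0 t1]; rewrite /h0.
    case: ifPn => [/andP[ax xb]|_]; last first.
      by rewrite gt0_muleNy ?lte_fin // addNye leNye.
    case: ifPn => [/andP[ay yb]|_]; last first.
      by rewrite [X in _ + X]gt0_muleNy ?lte_fin ?subr_gt0 // addeNy leNye.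
    have -> : (a <= t * x + (1 - t) * y <= b)%R.
      apply/andP; split; nra.
    rewrite -!EFinM -EFinD lee_fin.
    by have -> : (t * M + (1 - t) * M = M)%R by ring.
  - by move=> x; rewrite /h0; case: ifP => _; rewrite ?ltry.
  - move=> x; apply: bigmax_ub => k Hk; rewrite /h0; case: ifPn => Hx.
      exact: HM.
    have : ~~ (-oo < nth d gs k x).
      by apply/negP => /(Hdom _ _ Hk); rewrite (negbTE Hx).
    by rewrite -leNgt => /le_trans; apply; rewrite leNye.
have envh0 : forall mu, envelope gs mu <= h0 mu.
  by move=> mu; apply: ereal_inf_lbound; exists h0.
split.
  move=> mu; apply: le_trans (envh0 mu) _; rewrite /h0; case: ifP => _ //.
  by rewrite leNye.
have [A EA] : exists A, nth d gs ka a = A%:E.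
  move: Ha (HM ka a Hka); case: (nth d gs ka a) => [A| |] //; by exists A.
have [B EB] : exists B, nth d gs kb b = B%:E.
  move: Hb (HM kb b Hkb); case: (nth d gs kb b) => [B| |] //; by exists B.
rewrite eqEsubset; split => mu /=; rewrite in_itv /=.
  move=> H; apply/negPn/negP => Hn; move: (envh0 mu); rewrite /h0 (negbTE Hn).
  by rewrite leNgt H.
move=> /andP[amu mub].
apply: (@lt_le_trans _ _ (Num.min A B)%:E); first exact: ltNyr.
rewrite /envelope; apply: le_ereal_inf_tmp.
move=> _ [h [Hc [Hp Hd]] <-].
have Hha : A%:E <= h a by rewrite -EA; exact: le_trans (nth_le_bigmax gs d a ka Hka) (Hd a).
have Hhb : B%:E <= h b by rewrite -EB; exact: le_trans (nth_le_bigmax gs d b kb Hkb) (Hd b).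
have [->|mua] := eqVneq mu a; first by apply: le_trans Hha; rewrite lee_fin ge_min lexx.
have [->|mub'] := eqVneq mu b; first by apply: le_trans Hhb; rewrite lee_fin ge_min lexx orbT.
have amu' : (a < mu)%R by rewrite lt_neqAle eq_sym mua amu.
have mub2 : (mu < b)%R by rewrite lt_neqAle mub' mub.
have ba : (0 < b - a)%R by rewrite subr_gt0; apply: lt_trans amu' mub2.
pose t := ((b - mu) / (b - a))%R.
have Ht : (0 < t < 1)%R.
  apply/andP; split; first by rewrite divr_gt0 // subr_gt0.
  by rewrite ltr_pdivrMr // mul1r; lra.
have Emu : mu = (t * a + (1 - t) * b)%R.
  rewrite /t; field; by rewrite gt_eqF.
have := Hc a b t Ht; rewrite -Emu.
move: Hha Hhb (Hp a) (Hp b).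
case: (h a) => [ra| |] //; case: (h b) => [rb| |] //.
rewrite !lee_fin -!EFinM -EFinD => Hra Hrb _ _ Hcc; apply: le_trans Hcc.
rewrite lee_fin; case/andP: Ht => t0 t1.
have L1 : (Num.min A B <= A)%R by rewrite ge_min lexx.
have L2 : (Num.min A B <= B)%R by rewrite ge_min lexx orbT.
nra.
Qed.


Definition d0 : gtree R := Leaf 0%R 0%R.
Definition gsOf p (l : seq (gtree R)) : seq (R -> \bar R) :=
  [seq restr f.1 f.2 | f <- zip (map (@U R) l) (betas p (map (@Vlo R) l))].

Lemma U_node p c cs : U (Node p c cs) = envelope (gsOf p (c :: cs)).
Proof. by []. Qed.

Lemma size_gsOf p l : size (gsOf p l) = size l.
Proof. by rewrite size_map size_zip size_map /betas size_map size_iota size_map minnn. Qed.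

Lemma nth_gsOf p l k dg : (k < size l)%N ->
  nth dg (gsOf p l) k = restr (U (nth d0 l k)) (beta p (map (@Vlo R) l) k).
Proof.
move=> Hk.
rewrite (nth_map (U d0, -oo)); last by rewrite size_zip size_map /betas size_map size_iota size_map minnn.
rewrite nth_zip; last by rewrite size_map /betas size_map size_iota size_map.
rewrite /= (nth_map d0) //= /betas (nth_map 0%N) ?size_iota ?size_map // nth_iota //.
Qed.

Lemma nth_vs l k : (k < size l)%N -> nth 0%R (map (@Vlo R) l) k = Vlo (nth d0 l k).
Proof. by move=> Hk; rewrite (nth_map d0). Qed.

Lemma fmax_ge (f : gtree R -> R) c cs k : (k < size (c :: cs))%N ->
  (f (nth d0 (c :: cs) k) <= foldr Num.max (f c) (map f cs))%R.
Proof.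
move=> Hk; apply: foldr_max_ge.
have -> : f c :: map f cs = map f (c :: cs) by [].
by rewrite -(nth_map d0 0%R) // mem_nth // size_map.
Qed.

Lemma fmin_le (f : gtree R -> R) c cs k : (k < size (c :: cs))%N ->
  (foldr Num.min (f c) (map f cs) <= f (nth d0 (c :: cs) k))%R.
Proof.
move=> Hk; apply: foldr_min_le.
have -> : f c :: map f cs = map f (c :: cs) by [].
by rewrite -(nth_map d0 0%R) // mem_nth // size_map.
Qed.

Lemma fmax_mem (f : gtree R -> R) c cs : exists2 k, (k < size (c :: cs))%N &
  foldr Num.max (f c) (map f cs) = f (nth d0 (c :: cs) k).
Proof.
have := foldr_max_mem (f c) (map f cs).
have -> : f c :: map f cs = map f (c :: cs) by [].
case/(nthP 0%R) => k; rewrite size_map => Hk Ek; exists k => //.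
by rewrite -Ek (nth_map d0).
Qed.

Lemma fmin_mem (f : gtree R -> R) c cs : exists2 k, (k < size (c :: cs))%N &
  foldr Num.min (f c) (map f cs) = f (nth d0 (c :: cs) k).
Proof.
have := foldr_min_mem (f c) (map f cs).
have -> : f c :: map f cs = map f (c :: cs) by [].
case/(nthP 0%R) => k; rewrite size_map => Hk Ek; exists k => //.
by rewrite -Ek (nth_map d0).
Qed.

Lemma tau_ge (vs : seq R) k j : (j < size vs)%N -> j != k -> (nth 0%R vs j)%:E <= tau vs k.
Proof.
move=> Hj Hjk; rewrite /tau.
exact: (@le_bigmax_cond _ _ _ -oo (Ordinal Hj) (fun i : 'I_(size vs) => (i : nat) != k)
  (fun i : 'I_(size vs) => (nth 0%R vs i)%:E)).
Qed.

Lemma tau_le (vs : seq R) k z :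
  (forall j, (j < size vs)%N -> j != k -> (nth 0%R vs j <= z)%R) -> tau vs k <= z%:E.
Proof.
move=> H; rewrite /tau; apply: bigmax_le; first exact: leNye.
move=> i Hi; rewrite lee_fin; exact: H.
Qed.


Definition Inv (t : gtree R) : Prop :=
  (Vlo t <= Vhi t)%R /\ (exists M : R, forall mu, U t mu <= M%:E) /\
  [set mu | -oo < U t mu] = `[Vlo t, Vhi t]%classic.

Lemma unifM (l : seq (gtree R)) : List.Forall Inv l ->
  exists M : R, forall k mu, (k < size l)%N -> U (nth d0 l k) mu <= M%:E.
Proof.
elim: l => [|t l IH] H; first by exists 0%R.
inversion H as [|x l' [_ [[M1 HM1] _]] Hl]; subst.
have [M2 HM2] := IH Hl.
exists (Num.max M1 M2) => -[|k] mu /= Hk.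
  by apply: le_trans (HM1 mu) _; rewrite lee_fin le_max lexx.
by apply: le_trans (HM2 k mu Hk) _; rewrite lee_fin le_max lexx orbT.
Qed.

Lemma dom_child (t : gtree R) x : Inv t -> -oo < U t x -> (Vlo t <= x <= Vhi t)%R.
Proof.
move=> [_ [_ Hs]] H.
have : [set mu | -oo < U t mu] x by [].
by rewrite Hs /= in_itv.
Qed.

Lemma dom_child' (t : gtree R) x : Inv t -> (Vlo t <= x <= Vhi t)%R -> -oo < U t x.
Proof.
move=> [_ [_ Hs]] H.
have : `[Vlo t, Vhi t]%classic x by rewrite /= in_itv.
by rewrite -Hs.
Qed.

Lemma Inv_all t : Inv t.
Proof.
elim/gtree_ind': t => [r1 r2|p c cs Hc Hcs].
  split; first by [].
  split; first by exists r1 => mu /=; case: ifP => _; rewrite ?lexx ?leNye.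
  rewrite eqEsubset; split => mu /=; rewrite in_itv /=.
    by case: eqP => [->|_]; rewrite ?lexx.
  by rewrite -eq_le => /eqP ->; rewrite eqxx ltNyr.
set l := c :: cs.
have Hl : List.Forall Inv l by constructor.
have Ik : forall k, (k < size l)%N -> Inv (nth d0 l k) by move=> k; exact: Forall_nth.
have [M HM] := unifM _ Hl.
have lowfact : forall k x, (k < size l)%N -> beta p (map (@Vlo R) l) k <= x%:E ->
    (Vlo (nth d0 l k) <= x)%R -> (Vlo (Node p c cs) <= x)%R.
  move=> k x Hk; case: p => /= Hb lx.
    exact: le_trans (fmin_le (@Vlo R) _ _ _ Hk) lx.
  have [j Hj Ej] := fmax_mem (@Vlo R) c cs; rewrite Ej.
  have [->|jk] := eqVneq j k; first exact: lx.
  rewrite -lee_fin; apply: le_trans Hb.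
  by rewrite -nth_vs //; apply: tau_ge; rewrite ?size_map.
have betaA : forall k, beta p (map (@Vlo R) l) k <= (Vlo (Node p c cs))%:E.
  move=> k; case: p {lowfact}; first exact: leNye.
  apply: tau_le => j; rewrite size_map => Hj _; rewrite nth_vs //.
  exact: (fmax_ge (@Vlo R)).
have betaB : forall k z, (forall j, (j < size l)%N -> (Vlo (nth d0 l j) <= z)%R) ->
    beta p (map (@Vlo R) l) k <= z%:E.
  move=> k z Hz; case: p {lowfact betaA}; first exact: leNye.
  apply: tau_le => j; rewrite size_map => Hj _; rewrite nth_vs //; exact: Hz.
have [ka Hka Ea] : exists2 k, (k < size l)%N & Vlo (Node p c cs) = Vlo (nth d0 l k).
  case: p {lowfact betaA betaB} => /=; [exact: (fmin_mem (@Vlo R))|exact: (fmax_mem (@Vlo R))].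
set a := Vlo (Node p c cs).
set b := Vhi (Node p c cs).
have bge : forall k, (k < size l)%N -> (Vhi (nth d0 l k) <= b)%R.
  by move=> k Hk; exact: (fmax_ge (@Vhi R)).
have [kb Hkb Eb] : exists2 k, (k < size l)%N & b = Vhi (nth d0 l k).
  exact: (fmax_mem (@Vhi R)).
have ab : (a <= b)%R.
  by rewrite /a Ea; apply: le_trans (bge _ Hka); case: (Ik _ Hka).
have [HMe Hset] : (forall mu, envelope (gsOf p l) mu <= M%:E) /\
    [set mu | -oo < envelope (gsOf p l) mu] = `[a, b]%classic.
  apply: (@env_dom _ a b M (U d0) ab); rewrite size_gsOf.
  - move=> k x Hk; rewrite nth_gsOf // /restr; case: ifP => _; [exact: HM | exact: leNye].
  - move=> k x Hk; rewrite nth_gsOf // /restr; case: ifPn => Hb; last by rewrite ltxx.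
    move=> Hu; have /andP[lx xh] := dom_child _ _ (Ik _ Hk) Hu.
    rewrite (le_trans xh (bge _ Hk)) andbT; exact: lowfact Hk Hb lx.
  - exists ka => //; rewrite nth_gsOf // /restr.
    have := betaA ka; rewrite -/a => ->.
    apply: (dom_child' _ _ (Ik _ Hka)); rewrite /a Ea lexx /=; by case: (Ik _ Hka).
  - exists kb => //; rewrite nth_gsOf // /restr betaB; last first.
      move=> j Hj; apply: le_trans (bge _ Hj); by case: (Ik _ Hj).
    apply: (dom_child' _ _ (Ik _ Hkb)); rewrite Eb lexx andbT; by case: (Ik _ Hkb).
split; first exact: ab.
split; first by exists M; exact: HMe.
exact: Hset.
Qed.

End S.

Theorem lemma3 (R : realType) (s : gtree R) :
  [set mu : R | (-oo < U s mu)%E] = `[Vlo s, Vhi s].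
Proof. have [_ [_ H]] := @Inv_all R s. exact: H. Qed.
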